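(* Let $F$ be a field and $n_1,n_2,n_3,n_4$ positive integers; write $\mathrm{Mat}_{a,b}$ for $a\times b$ matrices over $F$. (1) Let $T_{42}\in\mathrm{Mat}_{n_4,n_2}$ and $T_{31}\in\mathrm{Mat}_{n_3,n_1}$. Then the subspace $\{X_{23}\in\mathrm{Mat}_{n_2,n_3} : T_{42}X_{23}=0,\ X_{23}T_{31}=0\}$ has codimension $n_3\operatorname{rank}(T_{42})+n_2\operatorname{rank}(T_{31})-\operatorname{rank}(T_{31})\operatorname{rank}(T_{42})$ in $\mathrm{Mat}_{n_2,n_3}$. (2) Let $T_{31}\in\mathrm{Mat}_{n_3,n_1}$, $T_{42}\in\mathrm{Mat}_{n_4,n_2}$, $T_{41}\in\mathrm{Mat}_{n_4,n_1}$, and assume that the row spaces of $T_{31}$ and $T_{41}$ (subspaces of $F^{n_1}$) intersect trivially and that the column spaces of $T_{42}$ and $T_{41}$ (subspaces of $F^{n_4}$) intersect trivially. Then the subspace $\{(X_{12},X_{34})\in\mathrm{Mat}_{n_1,n_2}\times\mathrm{Mat}_{n_3,n_4} : T_{31}X_{12}=X_{34}T_{42},\ T_{41}X_{12}=0,\ X_{34}T_{41}=0\}$ has codimension $\operatorname{rank}(T_{41})n_2+\operatorname{rank}(T_{41})n_3+\operatorname{rank}(T_{31})\operatorname{rank}(T_{42})+(n_2-\operatorname{rank}(T_{42}))\operatorname{rank}(T_{31})+(n_3-\operatorname{rank}(T_{31}))\operatorname{rank}(T_{42})$ in $\mathrm{Mat}_{n_1,n_2}\times\mathrm{Mat}_{n_3,n_4}$.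 *)

(* Defs.v *)
From HB Require Import structures.
From mathcomp Require Import all_boot all_order all_algebra.
Set Implicit Arguments. Unset Strict Implicit. Unset Printing Implicit Defensive.
Import GRing.Theory.

(* Main.v *)
Require Import Defs.
From HB Require Import structures.
From mathcomp Require Import all_boot all_order all_algebra.
From mathcomp Require Import zify.
Import GRing.Theory.
Local Open Scope ring_scope.

Section Aux.
Variable F : fieldType.

Definition mkLin {U V : lmodType F} {f : U -> V} (pf : linear f) : {linear U -> V} :=
  HB.pack f (GRing.isLinear.Build F U V *:%R f pf).

Lemma mkLinE (U V : vectType F) (f : U -> V) (pf : linear f) x :
  linfun (mkLin pf) x = f x.
Proof. by rewrite lfunE. Qed.

Lemma rect m n p q (S : 'M[F]_(p,m)) (R : 'M[F]_(q,n)) :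
  exists V : {vspace 'M[F]_(m,n)},
    (forall X, (X \in V) = (X^T <= S)%MS && (X <= R)%MS) /\
    \dim V = (\rank S * \rank R)%N.
Proof.
have [Sb eqS frS] : exists2 Sb : 'M[F]_(\rank S, m), (Sb :=: S)%MS & row_free Sb.
  by exists (row_base S); [exact: eq_row_base | exact: row_base_free].
have [Rb eqR frR] : exists2 Rb : 'M[F]_(\rank R, n), (Rb :=: R)%MS & row_free Rb.
  by exists (row_base R); [exact: eq_row_base | exact: row_base_free].
pose f := fun Y : 'M[F]_(\rank S, \rank R) => Sb^T *m Y *m Rb.
have pf : linear f.
  by move=> a x y; rewrite /f mulmxDr mulmxDl -scalemxAr -scalemxAl.
pose fL := linfun (mkLin pf).
have finj : injective fL.
  move=> y1 y2; rewrite !mkLinE /f => /(row_free_inj frR).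
  move/(congr1 trmx); rewrite !trmx_mul !trmxK.
  by move/(row_free_inj frS)/(congr1 trmx); rewrite !trmxK.
exists (limg fL); split.
  move=> X; apply/memv_imgP/andP.
    case=> Y _ ->; rewrite mkLinE /f; split.
      by rewrite !trmx_mul trmxK mulmxA (submx_trans (submxMl _ _)) // eqS.
    by apply: submx_trans (submxMl _ _) _; rewrite eqR.
  case=> sS sR.
  have sS' : (X^T <= Sb)%MS by rewrite eqS.
  have sR' : (X <= Rb)%MS by rewrite eqR.
  exists ((X^T *m pinvmx Sb)^T *m pinvmx Rb); first exact: memvf.
  rewrite mkLinE /f mulmxA -trmx_mul (mulmxKpV sS') trmxK.
  by rewrite (mulmxKpV sR').
rewrite limg_dim_eq ?dimvf /= ?dim_matrix //.
rewrite capfv; apply/eqP/lker0P => //.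
Qed.

End Aux.
Arguments rect {F m n p q}.
Arguments mkLin {F U V f}.
Arguments mkLinE {F U V f}.

Theorem lemma3p3 (F : fieldType) (n1 n2 n3 n4 : nat)
  (hn1 : (0 < n1)%N) (hn2 : (0 < n2)%N) (hn3 : (0 < n3)%N) (hn4 : (0 < n4)%N) :
  (* (1) *)
  (forall (T42 : 'M[F]_(n4, n2)) (T31 : 'M[F]_(n3, n1)),
     exists V : {vspace 'M[F]_(n2, n3)},
       (forall X : 'M[F]_(n2, n3),
          (X \in V) = (T42 *m X == 0) && (X *m T31 == 0)) /\
       ((\dim {: 'M[F]_(n2, n3)})%:Z - (\dim V)%:Z
        = (n3 * \rank T42 + n2 * \rank T31)%:Z - (\rank T31 * \rank T42)%:Z)%R)
  /\
  (* (2) *)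
  (forall (T31 : 'M[F]_(n3, n1)) (T42 : 'M[F]_(n4, n2)) (T41 : 'M[F]_(n4, n1)),
     (T31 :&: T41)%MS == 0 ->
     (T42^T :&: T41^T)%MS == 0 ->
     exists V : {vspace ('M[F]_(n1, n2) * 'M[F]_(n3, n4))%type},
       (forall X : ('M[F]_(n1, n2) * 'M[F]_(n3, n4))%type,
          (X \in V) = [&& T31 *m X.1 == X.2 *m T42,
                          T41 *m X.1 == 0 & X.2 *m T41 == 0]) /\
       ((\dim {: ('M[F]_(n1, n2) * 'M[F]_(n3, n4))%type})%:Z - (\dim V)%:Z
        = (\rank T41 * n2 + \rank T41 * n3 + \rank T31 * \rank T42
           + (n2 - \rank T42) * \rank T31
           + (n3 - \rank T31) * \rank T42)%N%:Z)%R).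
Proof.
split.
  move=> T42 T31.
  have [V [memV dimV]] := rect (kermx T42^T) (kermx T31).
  exists V; split.
    move=> X; rewrite memV !sub_kermx; congr andb.
    apply/eqP/eqP => H.
      by rewrite -(trmxK (T42 *m X)) trmx_mul H trmx0.
    by rewrite -trmx_mul H trmx0.
  rewrite dimV dimvf dim_matrix !mxrank_ker mxrank_tr.
  have := rank_leq_col T42; have := rank_leq_row T31.
  nia.
move=> T31 T42 T41 /eqP d1 /eqP d2.
pose Dom := ('M[F]_(n1,n2) * 'M[F]_(n3,n4))%type.
have pg1 : linear (fun X : Dom => T41 *m X.1).
  by move=> a x y; rewrite /= mulmxDr scalemxAr.
have pg2 : linear (fun X : Dom => X.2 *m T41).
  by move=> a x y; rewrite /= mulmxDl scalemxAl.
have ph : linear (fun X : Dom => T31 *m X.1 - X.2 *m T42).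
  by move=> a x y; rewrite /= mulmxDr mulmxDl -scalemxAr -scalemxAl scalerBr opprD addrACA.
pose g1 := linfun (mkLin pg1); pose g2 := linfun (mkLin pg2); pose h := linfun (mkLin ph).
exists (lker g1 :&: lker g2 :&: lker h)%VS; split.
  move=> X; rewrite !memv_cap !memv_ker !mkLinE subr_eq0.
  by rewrite andbC.
have e1 := limg_ker_dim g1 fullv; rewrite capfv in e1.
have e2 := limg_ker_dim g2 (lker g1).
have e3 := limg_ker_dim h (lker g1 :&: lker g2).
have [W1 [memW1 dimW1]] := rect (T41^T) (1%:M : 'M[F]_n2).
have eW1 : (g1 @: fullv = W1)%VS.
  apply/vspaceP => Y; rewrite memW1 submx1 andbT; apply/memv_imgP/idP.
    by case=> X _ ->; rewrite mkLinE trmx_mul submxMl.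
  case/submxP => D eY; exists (D^T, 0); first exact: memvf.
  by rewrite mkLinE /= -[Y]trmxK eY trmx_mul trmxK.
have [W2 [memW2 dimW2]] := rect (1%:M : 'M[F]_n3) T41.
have eW2 : (g2 @: lker g1 = W2)%VS.
  apply/vspaceP => Y; rewrite memW2 submx1 /=; apply/memv_imgP/idP.
    by case=> X _ ->; rewrite mkLinE submxMl.
  case/submxP => D ->; exists (0, D); last by rewrite mkLinE.
  by rewrite memv_ker mkLinE /= mulmx0.
have [C [memC dimC]] := rect (T31^T) (1%:M : 'M[F]_n2).
have [Dd [memD dimD]] := rect (1%:M : 'M[F]_n3) T42.
have [CD [memCD dimCD]] := rect (T31^T) T42.
have eCD : (C :&: Dd = CD)%VS.
  by apply/vspaceP => Y; rewrite memv_cap memC memD memCD !submx1 andbT.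
have d1' : (<<T31>>%MS :&: <<T41>>%MS = 0)%MS.
  by apply/eqP; rewrite -submx0 (cap_eqmx (genmxE _) (genmxE _)) d1 submx_refl.
have d2' : (<<T42^T>>%MS :&: <<T41^T>>%MS = 0)%MS.
  by apply/eqP; rewrite -submx0 (cap_eqmx (genmxE _) (genmxE _)) d2 submx_refl.
pose P := proj_mx <<T31>>%MS <<T41>>%MS; pose Q := proj_mx <<T42^T>>%MS <<T41^T>>%MS.
have eP1 : T31 *m P = T31 by apply: proj_mx_id; rewrite ?genmxE.
have eP0 : T41 *m P = 0 by apply: proj_mx_0; rewrite ?genmxE.
have eQ1 : Q^T *m T42 = T42.
  by rewrite -[T42 in LHS]trmxK -trmx_mul proj_mx_id ?trmxK ?genmxE.
have eQ0 : Q^T *m T41 = 0.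
  by rewrite -[T41 in LHS]trmxK -trmx_mul proj_mx_0 ?trmx0 ?genmxE.
have eH : (h @: (lker g1 :&: lker g2) = C + Dd)%VS.
  apply/vspaceP => Y; apply/memv_imgP/memv_addP.
    case=> X _ ->; rewrite mkLinE.
    exists (T31 *m X.1); first by rewrite memC submx1 andbT trmx_mul submxMl.
    exists (- (X.2 *m T42)) => //.
    by rewrite memD submx1 /= -mulNmx submxMl.
  case=> u; rewrite memC submx1 andbT => /submxP[A eu] [v].
  rewrite memD submx1 /= => /submxP[B ->] ->.
  exists (P *m A^T, - (B *m Q^T)).
    rewrite memv_cap !memv_ker !mkLinE /= mulmxA eP0 mul0mx eqxx /=.
    by rewrite mulNmx -mulmxA eQ0 mulmx0 oppr0.
  rewrite mkLinE /= mulmxA eP1 mulNmx opprK -mulmxA eQ1.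
  by rewrite -[u]trmxK eu trmx_mul trmxK.
have es := dimv_sum_cap C Dd.
rewrite eH in e3; rewrite eW2 in e2; rewrite eW1 in e1.
rewrite eCD in es.
move: e1 e2 e3 es; rewrite dimW1 dimW2 dimC dimD dimCD !mxrank_tr !mxrank1.
rewrite dimvf.
have -> : dim Dom = (n1 * n2 + n3 * n4)%N by [].
have := rank_leq_col T42; have := rank_leq_row T31.
move: (\dim (lker g1)) (\dim (lker g1 :&: lker g2)) (\dim (C + Dd)) => a b c.
move: (\dim (lker g1 :&: lker g2 :&: lker h)) => d.
move: (\rank T41) (\rank T31) (\rank T42) => r41 r31 r42.
nia.
Qed.
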